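(* Let $A$ be a finite abelian group of even exponent $m$. If $A$ has no sections isomorphic to any of $Z_2^3$, $Z_4\times Z_2$, $Z_p^2$, $Z_p\times Z_2^2$, where $p$ ranges over the odd prime divisors of $m$, then $A$ is isomorphic to a section of the dihedral group $D_{2m}=\langle a,b\mid a^m=b^2=1,\ b^{-1}ab=a^{-1}\rangle$.
   Context: $Z_n$ denotes the cyclic group of order $n$; a section of a group is a quotient of one of its subgroups. *)

(* Defs.v *)
From mathcomp Require Import all_boot all_fingroup all_solvable.
From mathcomp Require Import zmodp.
From mathcomp Require Export extremal.

Set Implicit Arguments.
Unset Strict Implicit.
Unset Printing Implicit Defensive.

Local Open Scope group_scope.

Definition has_section (gT rT : finGroupType) (G : {set gT}) (H : {set rT}) :=
  exists (K N : {group gT}), [/\ K \subset G, N <| K & (K / N) \isog H].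

(* Concrete cyclic groups Z_n are the additive groups 'Z_n (n >= 2);         *)
Definition Z2cube := [set: ('Z_2 * 'Z_2 * 'Z_2)%type].
Definition Z4xZ2 := [set: ('Z_4 * 'Z_2)%type].
Definition Zpsq (p : nat) := [set: ('Z_p * 'Z_p)%type].
Definition ZpxZ2sq (p : nat) := [set: ('Z_p * 'Z_2 * 'Z_2)%type].

(* Main.v *)
Require Import Defs.
From mathcomp Require Import all_boot all_fingroup all_solvable.
From mathcomp Require Import zmodp extremal.

Local Open Scope group_scope.
Set Implicit Arguments. Unset Strict Implicit. Unset Printing Implicit Defensive.
Lemma setTX (T1 T2 : finGroupType) : [set: T1 * T2] = setX [set: T1] [set: T2].
Proof. by apply/setP => -[a b]; rewrite !inE. Qed.

Lemma prodT_isog (gT T1 T2 : finGroupType) (X Y K : {group gT}) :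
  X \x Y = K -> X \isog [set: T1] -> Y \isog [set: T2] -> K \isog [set: T1 * T2].
Proof.
move=> dK iX iY; rewrite setTX.
apply: (isog_dprod dK (setX_dprod [set: T1]%G [set: T2]%G)).
  by apply: (isog_trans iX); apply: isog_setX1.
by apply: (isog_trans iY); apply: isog_set1X.
Qed.

Lemma prodT_dprod (T1 T2 : finGroupType) :
  exists2 X : {group T1 * T2}, X \isog [set: T1] & exists2 Y : {group T1 * T2},
   Y \isog [set: T2] & X \x Y = [set: T1 * T2].
Proof.
exists (setX [set: T1] 1)%G; first by rewrite isog_sym isog_setX1.
exists (setX 1 [set: T2])%G; first by rewrite isog_sym isog_set1X.
by rewrite setTX setX_dprod.
Qed.

Lemma Zn_cyclic n : 1 < n -> cyclic [set: 'Z_n] /\ #|[set: 'Z_n]| = n.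
Proof.
move=> n1; split; first by rewrite Zp_cycle cycle_cyclic.
by rewrite cardsT card_ord Zp_cast.
Qed.

Lemma Zn_abelem p : prime p -> p.-abelem [set: 'Z_p].
Proof.
move=> pp; apply: prime_abelem => //; have [_ ->] := Zn_cyclic (prime_gt1 pp); done.
Qed.

Lemma prodT_abelem p (T1 T2 : finGroupType) : p.-abelem [set: T1] -> p.-abelem [set: T2] ->
  p.-abelem [set: T1 * T2].
Proof.
move=> a1 a2; have [X iX [Y iY dK]] := prodT_dprod T1 T2.
by have := dprod_abelem p dK; rewrite (isog_abelem iX) (isog_abelem iY) a1 a2 => ->.
Qed.

Lemma cardT_prod (T1 T2 : finGroupType) : #|[set: T1 * T2]| = (#|[set: T1]| * #|[set: T2]|)%N.
Proof. by rewrite !cardsT card_prod. Qed.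
Lemma D_elt m : 1 < m -> exists2 x, x \in 'D_(m.*2) & #[x] = m.
Proof.
move=> m1; have := isoGrp_hom (Grp_dihedral m1).
case/existsP=> -[x y] /= /eqP[defD xm y2 xy].
exists x; first by rewrite inE.
have dxm : #[x] %| m by rewrite order_dvdn xm.
have ny : <[y]> \subset 'N(<[x]>) by rewrite norms_cycle xy groupV cycle_id.
have cD := card_dihedral m1.
rewrite -defD norm_joinEr // in cD.
have : (#|(<[x]> * <[y]>)%g| <= #[x] * #[y])%N.
  by rewrite /order mul_cardG leq_pmulr // cardG_gt0.
rewrite cD.
have : #[y] %| 2 by rewrite order_dvdn y2.
move=> dy le; apply/eqP; rewrite eqn_leq dvdn_leq //=; last by rewrite ltnW.
have y2' : (#[y] <= 2)%N by rewrite dvdn_leq.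
rewrite -(leq_pmul2r (isT : 0 < 2)%N) muln2 (leq_trans le) // leq_mul2l y2' orbT //.
Qed.
Lemma dprod_cyc (gT : finGroupType) (A X : {group gT}) y :
  abelian A -> X \subset A -> y \in A -> prime #[y] -> y \notin X ->
  X \x <[y]> = X <*> <[y]>.
Proof.
move=> cA sX Ay py nyX; apply: dprodEY.
  by apply: (sub_abelian_cent2 cA) => //; rewrite cycle_subG.
by rewrite setIC prime_TIg // cycle_subG.
Qed.

Lemma D4_isog (gT : finGroupType) (A : {group gT}) :
  2.-abelem A -> #|A| = 4%N -> [set: gsort 'D_(2.*2)] \isog A.
Proof.
move=> aA cA; rewrite isog_sym.
apply/(isoGrpP _ (Grp_dihedral (isT : 1 < 2))); split.
  by rewrite cA card_dihedral.
have cAA := abelem_abelian aA.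
have [x Ax nx] : exists2 x, x \in A & x != 1.
  by apply/trivgPn; rewrite -cardG_gt1 cA.
have ox : #[x] = 2 := abelem_order_p aA Ax nx.
have [y Ay nyx] : exists2 y, y \in A & y \notin <[x]>.
  apply/subsetPn; apply/negP => /subset_leq_card; rewrite cA -orderE ox //.
have ny : y != 1 by apply: contraNneq nyx => ->; rewrite group1.
have oy : #[y] = 2 := abelem_order_p aA Ay ny.
have sxA : <[x]> \subset A by rewrite cycle_subG.
have dxy := dprod_cyc cAA sxA Ay (etrans (congr1 prime oy) isT) nyx.
apply/existsP; exists (x, y); rewrite /= !xpair_eqE.
have x2 : x ^+ 2 = 1 by rewrite -ox expg_order.
have y2 : y ^+ 2 = 1 by rewrite -oy expg_order.
rewrite x2 y2 !eqxx /=; apply/andP; split.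
  rewrite eqEcard join_subG sxA cycle_subG Ay /= -(dprod_card dxy) cA.
  by rewrite -!orderE ox oy.
rewrite invg_expg ox /= conjgE.
by rewrite (centsP cAA x Ax y Ay) mulKg.
Qed.

Lemma prodT_cyclic (T1 T2 : finGroupType) : cyclic [set: T1] -> cyclic [set: T2] ->
  coprime #|[set: T1]| #|[set: T2]| -> cyclic [set: T1 * T2].
Proof.
move=> c1 c2 co; have [X iX [Y iY dK]] := prodT_dprod T1 T2.
have := cyclic_dprod dK; rewrite (isog_cyclic iX) (isog_cyclic iY) c1 c2.
by rewrite (card_isog iX) (card_isog iY) co => /(_ isT isT).
Qed.

Lemma cyc_isogZ (gT : finGroupType) (x : gT) n : 1 < n -> #[x] = n ->
  <[x]> \isog [set: 'Z_n].
Proof.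
move=> n1 ox; have [cZ oZ] := Zn_cyclic n1.
by rewrite isog_cyclic_card ?cycle_cyclic // cZ oZ -orderE ox eqxx.
Qed.

Lemma pick_out (gT : finGroupType) (E C : {group gT}) :
  2.-abelem E -> #|E| = 4%N -> cyclic C ->
  exists2 v, v \in E & v \notin C /\ #[v] = 2.
Proof.
move=> aE oE cC.
have [v Ev nvC] : exists2 v, v \in E & v \notin C.
  apply/subsetPn; apply/negP => sEC.
  have := cyclicS sEC cC; rewrite (abelem_cyclic aE) oE.
  by rewrite (_ : 4 = 2 ^ 2)%N // pfactorK.
exists v => //; split => //; apply: (abelem_order_p aE Ev).
by apply: contraNneq nvC => ->; rewrite group1.
Qed.

Theorem lemma7 (gT : finGroupType) (A : {group gT}) (m : nat) :
  abelian A ->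
  exponent A = m ->
  ~~ odd m ->
  ~ has_section A Z2cube ->
  ~ has_section A Z4xZ2 ->
  (forall p, prime p -> odd p -> p %| m ->
     ~ has_section A (Zpsq p) /\ ~ has_section A (ZpxZ2sq p)) ->
  has_section [set: gsort 'D_(m.*2)] A.
Proof.
move=> cA expA evm nZ2c nZ4 nZp.
have m_gt0 : 0 < m by rewrite -expA exponent_gt0.
have two_m : 2 %| m by rewrite dvdn2.
have m_gt1 : 1 < m by case: m m_gt0 evm {expA two_m nZp} => [|[]].
have sec1 (rT : finGroupType) (H : {group rT}) (K : {group gT}) :
    K \subset A -> K \isog H -> has_section A H.
  move=> sKA iso; exists K, 1%G; split => //; first exact: normal1.
  exact: isog_trans (isog_symr (quotient1_isog K)) iso.
have F1 p : prime p -> 0 < 'r_p(A) -> p %| m.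
  move=> pp; rewrite p_rank_gt0 mem_primes => /and3P[_ _ pA].
  have [x Ax ox] := Cauchy pp pA.
  by rewrite -expA -ox dvdn_exponent.
have F2 p : prime p -> odd p -> 'r_p(A) <= 1.
  move=> pp op; rewrite leqNgt; apply/negP => r2.
  have [nS _] := nZp p pp op (F1 p pp (ltnW r2)).
  have [E] := p_rank_geP r2.
  case/pnElemPcard => sEA aE oE; apply: nS; apply: (sec1 _ _ E sEA).
  rewrite (isog_abelem_card _ aE) prodT_abelem ?Zn_abelem //=.
  by rewrite cardT_prod oE; have [_ ->] := Zn_cyclic (prime_gt1 pp).
have F3 : 'r_2(A) <= 2.
  rewrite leqNgt; apply/negP => r3.
  have [E] := p_rank_geP r3.
  case/pnElemPcard => sEA aE oE; apply: nZ2c; apply: (sec1 _ _ E sEA).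
  rewrite (isog_abelem_card _ aE) !prodT_abelem ?Zn_abelem //=.
  by rewrite !cardT_prod oE; have [_ ->] := Zn_cyclic (isT : 1 < 2).
have [r2le1 | r2gt1] := leqP 'r_2(A) 1.
  have rA : 'r(A) <= 1.
    have [p pp ->] := rank_witness A.
    by case: (even_prime pp) => [-> // | op]; apply: F2.
  have cycA : cyclic A by rewrite abelian_rank1_cyclic.
  have oA : #|A| = m by rewrite -expA exponent_cyclic.
  have [x _ ox] := D_elt m_gt1.
  exists <[x]>%G, 1%G; split; [exact: subsetT | exact: normal1 |].
  apply: isog_trans (isog_symr (quotient1_isog _)) _.
  by rewrite isog_cyclic_card ?cycle_cyclic // cycA oA -orderE ox eqxx.
have [E] := p_rank_geP r2gt1.
case/pnElemPcard => sEA aE oE.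
have ZpZ2 p : prime p -> odd p -> p %| m -> False.
  move=> pp op pm; have [_ nS] := nZp p pp op pm.
  have pA : p %| #|A| by rewrite (dvdn_trans pm) // -expA exponent_dvdn.
  have [z Az oz] := Cauchy pp pA.
  have [u Eu [nu1 ou]] := pick_out aE oE (cyclic1 gT).
  have Au : u \in A by apply: (subsetP sEA).
  have nuz : u \notin <[z]>.
    by apply/negP => /order_dvdG; rewrite -orderE oz ou dvdn2 op.
  have sZA : <[z]> \subset A by rewrite cycle_subG.
  have dX := dprod_cyc cA sZA Au (etrans (congr1 prime ou) isT) nuz.
  have cX : cyclic (<[z]> <*> <[u]>).
    by rewrite (cyclic_dprod dX) ?cycle_cyclic // -!orderE oz ou coprimen2.
  have oX : #|<[z]> <*> <[u]>| = (p * 2)%N by rewrite -(dprod_card dX) -!orderE oz ou.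
  have [v Ev [nvX ov]] := pick_out aE oE cX.
  have Av : v \in A by apply: (subsetP sEA).
  have sXA : <[z]> <*> <[u]> \subset A by rewrite join_subG !cycle_subG Az Au.
  have dK := dprod_cyc cA sXA Av (etrans (congr1 prime ov) isT) nvX.
  apply: nS; apply: (sec1 _ _ (<[z]> <*> <[u]> <*> <[v]>)%G).
    by rewrite join_subG sXA cycle_subG.
  apply: (prodT_isog dK); last exact: cyc_isogZ.
  have [c2 o2] := Zn_cyclic (isT : 1 < 2).
  have [cp op'] := Zn_cyclic (prime_gt1 pp).
  rewrite isog_cyclic_card // prodT_cyclic ?c2 ?cp ?o2 ?op' ?coprimen2 //=.
  by rewrite cardT_prod o2 op' oX.
have Z42 : 4 %| m -> False.
  move=> m4; have [w Aw ow] := exponent_witness (abelian_nil cA).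
  have [k km] := dvdnP m4.
  have k0 : 0 < k by move: m_gt0; rewrite km; case: k {km}.
  have ox : #[w ^+ k] = 4 by rewrite orderXdiv -ow expA km ?dvdn_mulr // mulKn.
  have [y Ey [nyx oy]] := pick_out aE oE (cycle_cyclic (w ^+ k)).
  have Ay : y \in A by apply: (subsetP sEA).
  have sxA : <[w ^+ k]> \subset A by rewrite cycle_subG groupX.
  have dK := dprod_cyc cA sxA Ay (etrans (congr1 prime oy) isT) nyx.
  apply: nZ4; apply: (sec1 _ _ (<[w ^+ k]> <*> <[y]>)%G).
    by rewrite join_subG sxA cycle_subG.
  by apply: (prodT_isog dK); apply: cyc_isogZ.
have m2 : m = 2.
  have [k km] := dvdnP two_m.
  case: (ltngtP k 1) => [k0|k1|k1]; last by rewrite km k1.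
    by move: m_gt0; rewrite km; case: k k0 {km}.
  have pk := pdiv_prime k1.
  case: (even_prime pk) => [p2 | op].
    by case: Z42; rewrite km (_ : 4 = 2 * 2)%N // dvdn_pmul2r // -p2 pdiv_dvd.
  by case: (ZpZ2 _ pk op); rewrite km dvdn_mulr // pdiv_dvd.
rewrite m2.
have aA : 2.-abelem A by apply: exponent2_abelem; rewrite expA m2.
have oA : #|A| = 4.
  rewrite (card_pgroup (abelem_pgroup aA)) -(p_rank_abelem aA).
  by have -> : 'r_2(A) = 2 by apply/eqP; rewrite eqn_leq F3.
exists [set: gsort 'D_(2.*2)]%G, 1%G; split; [exact: subxx | exact: normal1 |].
apply: isog_trans (isog_symr (quotient1_isog _)) _.
exact: D4_isog.
Qed.
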